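(* Let $A\in G(n\times m)$, $N\in G(n)$ and $M\in G(m)$. Then $\mathrm{troprank}(A)=\mathrm{troprank}(N\odot A\odot M)$, and $\mathrm{troprank}(A)$ equals the number of columns of $A$ having at least one finite entry.
   Context: $\mathbb{T}=\mathbb{R}\cup\{-\infty\}$ with $a\oplus b=\max\{a,b\}$, $a\odot b=a+b$, and tropical matrix product $(A\odot B)_{ij}=\bigoplus_k a_{ik}\odot b_{kj}$. $G(r\times s)$ is the set of $r\times s$ matrices over $\mathbb{T}$ with at most one finite entry in each row; $G(r)$ is the set of $r\times r$ matrices with exactly one finite entry in each row and each column. The tropical determinant of a square matrix is $\bigoplus_{\sigma}\bigodot_i A_{i,\sigma(i)}$; a minor vanishes if it equals $-\infty$. $\mathrm{troprank}(A)=k$ iff all $(k+1)\times(k+1)$ minors vanish and some $k\times k$ minor does not vanish. *)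

(* Defs.v *)
(* Tropical semiring T = R ∪ {-oo} modelled as option R,
   with None = -oo, over an arbitrary real domain R (the paper uses R = reals). *)
From HB Require Import structures.
From mathcomp Require Import all_boot all_order all_algebra all_fingroup.
Set Implicit Arguments. Unset Strict Implicit. Unset Printing Implicit Defensive.
Import Order.TTheory GRing.Theory Num.Theory.
Local Open Scope ring_scope.

Section Trop.
Variable R : realDomainType.

Definition trop := option R.

Definition tadd (a b : trop) : trop :=
  match a, b with
  | None, _ => b
  | _, None => a
  | Some x, Some y => Some (Num.max x y)
  end.

Definition tmul (a b : trop) : trop :=
  match a, b with
  | Some x, Some y => Some (x + y)
  | _, _ => None
  end.

Definition tmxmul (r p s : nat) (A : 'M[trop]_(r, p)) (B : 'M[trop]_(p, s))
  : 'M[trop]_(r, s) :=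
  \matrix_(i, j) \big[tadd/None]_(k < p) tmul (A i k) (B k j).

Definition tdet (k : nat) (A : 'M[trop]_k) : trop :=
  \big[tadd/None]_(s : 'S_k) \big[tmul/Some 0]_(i < k) A i (s i).

Definition has_nonvanishing_minor (r s k : nat) (A : 'M[trop]_(r, s)) : Prop :=
  exists (f : 'I_k -> 'I_r) (g : 'I_k -> 'I_s),
    injective f /\ injective g /\ tdet (mxsub f g A) <> None.

Definition is_troprank (r s : nat) (A : 'M[trop]_(r, s)) (k : nat) : Prop :=
  ~ has_nonvanishing_minor k.+1 A /\ has_nonvanishing_minor k A.

Definition inG (r s : nat) (A : 'M[trop]_(r, s)) : Prop :=
  forall i j1 j2, A i j1 <> None -> A i j2 <> None -> j1 = j2.

Definition inGsq (r : nat) (A : 'M[trop]_r) : Prop :=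
  (forall i, exists! j, A i j <> None) /\ (forall j, exists! i, A i j <> None).

Definition n_finite_cols (r s : nat) (A : 'M[trop]_(r, s)) : nat :=
  #|[set j : 'I_s | [exists i : 'I_r, A i j != None]]|.

End Trop.

(* Main.v *)
Require Import Defs.
From mathcomp Require Import all_boot all_order all_algebra all_fingroup.
Set Implicit Arguments. Unset Strict Implicit. Unset Printing Implicit Defensive.
Import Order.TTheory GRing.Theory Num.Theory.

Section Aux.
Variable R : realDomainType.

Lemma bigadd_neq (I : eqType) (r : seq I) (P : pred I) (F : I -> trop R) :
  (\big[@tadd R/None]_(i <- r | P i) F i != None) = has (fun i => P i && (F i != None)) r.
Proof.
elim: r => [|x r IH]; first by rewrite big_nil.
rewrite big_cons /=; case: (P x) => //=.
by case: (F x) => [a|] //=; case: (\big[_/_]_(i <- r | P i) F i).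
Qed.

Lemma bigmul_neq (I : eqType) (r : seq I) (P : pred I) (F : I -> trop R) :
  (\big[@tmul R/Some 0%R]_(i <- r | P i) F i != None) = all (fun i => P i ==> (F i != None)) r.
Proof.
elim: r => [|x r IH]; first by rewrite big_nil.
rewrite big_cons /=; case: (P x) => //=.
by rewrite -IH; case: (F x) => [a|] //=; case: (\big[_/_]_(i <- r | P i) F i).
Qed.

Lemma tsum_fin (I : finType) (P : pred I) (F : I -> trop R) :
  (\big[@tadd R/None]_(i | P i) F i != None) <-> exists i, P i && (F i != None).
Proof.
rewrite bigadd_neq; split.
  by case/hasP => i _ H; exists i.
by case=> i H; apply/hasP; exists i => //; rewrite mem_index_enum.
Qed.

Lemma tprod_fin (I : finType) (P : pred I) (F : I -> trop R) :
  (\big[@tmul R/Some 0%R]_(i | P i) F i != None) <-> forall i, P i -> F i != None.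
Proof.
rewrite bigmul_neq; split.
  by move/allP => H i Pi; have := H i (mem_index_enum i); rewrite Pi.
by move=> H; apply/allP => i _; apply/implyP; apply: H.
Qed.

Lemma tmul_fin (a b : trop R) : (tmul a b != None) = (a != None) && (b != None).
Proof. by case: a; case: b. Qed.

Lemma tdet_fin k (A : 'M[trop R]_k) :
  tdet A != None <-> exists s : 'S_k, forall i, A i (s i) != None.
Proof.
rewrite /tdet; split.
  by case/tsum_fin=> s /= /tprod_fin H; exists s => i; apply: H.
by case=> s H; apply/tsum_fin; exists s; apply/tprod_fin.
Qed.

Lemma tmx_fin r p s (X : 'M[trop R]_(r, p)) (Y : 'M[trop R]_(p, s)) i j :
  tmxmul X Y i j != None <-> exists l, (X i l != None) && (Y l j != None).
Proof.
rewrite /tmxmul mxE; split.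
  by case/tsum_fin=> l H; exists l; rewrite -tmul_fin.
by case=> l H; apply/tsum_fin; exists l; rewrite tmul_fin.
Qed.

Definition fcols r s (B : 'M[trop R]_(r, s)) :=
  [set j : 'I_s | [exists i : 'I_r, B i j != None]].

Lemma hnm_le r s k (B : 'M[trop R]_(r, s)) :
  has_nonvanishing_minor k B -> k <= n_finite_cols B.
Proof.
case=> f [g [injf [injg /eqP]]] /tdet_fin [s0 Hs].
rewrite /n_finite_cols.
have inj : injective (g \o s0) by move=> x y /= E; apply: (@perm_inj _ s0); apply: injg.
have <- : #|(g \o s0) @: [set: 'I_k]| = k by rewrite card_imset // cardsT card_ord.
apply: subset_leq_card; apply/subsetP => x /imsetP [i _ ->].
rewrite in_set; apply/existsP; exists (f i).
by have := Hs i; rewrite mxE.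
Qed.

Lemma hnm_ge r s k (B : 'M[trop R]_(r, s)) :
  inG B -> k <= n_finite_cols B -> has_nonvanishing_minor k B.
Proof.
move=> HG hk.
set S := [set j : 'I_s | [exists i : 'I_r, B i j != None]] in hk.
pose g (i : 'I_k) : 'I_s := @enum_val _ (mem S) (widen_ord hk i).
have ex : forall i, exists x, B x (g i) != None.
  move=> i; have := enum_valP (widen_ord hk i); rewrite in_set.
  by move/existsP.
pose f i := xchoose (ex i).
have Hf : forall i, B (f i) (g i) != None by move=> i; exact: (xchooseP (ex i)).
have injg : injective g.
  by move=> x y /enum_val_inj /(congr1 val) /= /val_inj.
exists f, g; split; last split => //.
  move=> x y Exy; apply: injg; apply: (HG (f x)); first by apply/eqP.
  by rewrite Exy; apply/eqP.
apply/eqP/tdet_fin; exists 1%g => i; rewrite mxE perm1; exact: Hf.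
Qed.

Lemma rank_char r s (B : 'M[trop R]_(r, s)) :
  inG B -> forall k, is_troprank B k <-> k = n_finite_cols B.
Proof.
move=> HG k; split.
  case=> H1 H2; have le := hnm_le H2.
  apply/eqP; rewrite eqn_leq le /=; rewrite leqNgt; apply/negP => lt.
  by apply: H1; apply: hnm_ge.
move=> ->; split; last by apply: hnm_ge.
by move/hnm_le; rewrite ltnn.
Qed.

Lemma inG_left n m (N : 'M[trop R]_n) (A : 'M[trop R]_(n, m)) :
  inG A -> inGsq N -> inG (tmxmul N A) /\ n_finite_cols (tmxmul N A) = n_finite_cols A.
Proof.
move=> HA [HNr HNc]; split.
  move=> i j1 j2 /eqP /tmx_fin [l1 /andP [N1 A1]] /eqP /tmx_fin [l2 /andP [N2 A2]].
  case: (HNr i) => x [_ U].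
  have E1 := U l1 (elimN eqP N1); have E2 := U l2 (elimN eqP N2).
  subst l1 l2; by apply: (HA x); apply/eqP.
rewrite /n_finite_cols; apply: eq_card => j; rewrite !in_set.
apply/existsP/existsP.
  by case=> i /tmx_fin [l /andP [_ H]]; exists l.
case=> l H; case: (HNc l) => i [Hi _]; exists i; apply/tmx_fin; exists l.
by rewrite H andbT; apply/eqP.
Qed.

Lemma inG_right n m (B : 'M[trop R]_(n, m)) (M : 'M[trop R]_m) :
  inG B -> inGsq M -> inG (tmxmul B M) /\ n_finite_cols (tmxmul B M) = n_finite_cols B.
Proof.
move=> HB [HMr HMc]; split.
  move=> i j1 j2 /eqP /tmx_fin [l1 /andP [B1 M1]] /eqP /tmx_fin [l2 /andP [B2 M2]].
  have E : l1 = l2 by apply: (HB i); apply/eqP.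
  subst l2; case: (HMr l1) => x [_ U].
  by rewrite -(U j1 (elimN eqP M1)) -(U j2 (elimN eqP M2)).
have ex : forall l, exists j, M l j != None.
  by move=> l; case: (HMr l) => j [Hj _]; exists j; apply/eqP.
pose q l := xchoose (ex l).
have Hq : forall l, M l (q l) != None by move=> l; exact: (xchooseP (ex l)).
have injq : injective q.
  move=> x y E; case: (HMc (q x)) => z [_ U].
  rewrite -(U x (elimN eqP (Hq x))) (U y); first by [].
  by rewrite E; apply/eqP.
rewrite /n_finite_cols -[RHS](card_imset _ injq); apply: eq_card => j.
rewrite in_set; apply/existsP/imsetP.
  case=> i /tmx_fin [l /andP [Bl Ml]]; exists l.
    by rewrite in_set; apply/existsP; exists i.
  case: (HMr l) => x [_ U].
  by rewrite -(U j (elimN eqP Ml)) -(U (q l) (elimN eqP (Hq l))).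
case=> l; rewrite in_set => /existsP [i Bi] ->; exists i; apply/tmx_fin.
by exists l; rewrite Bi Hq.
Qed.

End Aux.

Theorem mainTheorem3 (R : realDomainType) (n m : nat)
    (A : 'M[trop R]_(n, m)) (N : 'M[trop R]_n) (M : 'M[trop R]_m) :
  inG A -> inGsq N -> inGsq M ->
  (forall k, is_troprank A k <-> is_troprank (tmxmul (tmxmul N A) M) k) /\
  (forall k, is_troprank A k <-> k = n_finite_cols A).
Proof.
move=> HA HN HM.
have [G1 C1] := inG_left HA HN.
have [G2 C2] := inG_right G1 HM.
split=> k; last exact: rank_char.
have H1 := rank_char HA k; have H2 := rank_char G2 k.
rewrite C2 C1 in H2; tauto.
Qed.
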